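(* Let $\alpha\neq 0$, $\beta,\gamma$ be real numbers and $\lambda$ a nonnegative integer. For all nonnegative integers $n$, $$\mathcal{E}_{n}^{(\lambda)}(\alpha,\beta,\gamma)=(-1)^{n}A_{n}^{\lambda,-1/2}(\alpha,-\beta,-\gamma)=A_{n}^{\lambda,-1/2}(-\alpha,\beta,\gamma).$$
   Context: For a number $t$ and $\alpha$, the generalised factorial is $(t|\alpha)_n=\prod_{j=0}^{n-1}(t-j\alpha)$ for $n\ge 1$ and $(t|\alpha)_0=1$. For parameters $\alpha,\beta,\gamma$, the generalised Stirling numbers $S(n,k,\alpha,\beta,\gamma)$ ($0\le k\le n$) are defined by the polynomial identity $(t|\alpha)_n=\sum_{k=0}^{n}S(n,k,\alpha,\beta,\gamma)\,(t-\gamma|\beta)_k$ in the variable $t$. For a nonnegative integer $\lambda$ put $\binom{k+\lambda-1}{k}=\lambda(\lambda+1)\cdots(\lambda+k-1)/k!$ (equal to $1$ for $k=0$). Define $$A^{\lambda,x}_n(\alpha,\beta,\gamma)=\sum_{k=0}^{n}\binom{k+\lambda-1}{k}(-1)^{n+k}\beta^k k!\,S(n,k,\alpha,-\beta,-\gamma)\,x^k .$$ The higher order generalised Euler polynomials $\mathcal{E}_n^{(\lambda)}(\alpha,\beta,x)$ are defined by the formal power series identity $$\left[\frac{2}{(1+\alpha t)^{\beta/\alpha}+1}\right]^{\lambda}(1+\alpha t)^{x/\alpha}=\sum_{n=0}^{\infty}\mathcal{E}_{n}^{(\lambda)}(\alpha,\beta,x)\frac{t^{n}}{n!},$$ where $(1+\alpha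 t)^{c}=\sum_{j\ge0}\binom{c}{j}\alpha^jt^j$. *)

(* Defs.v *)
From HB Require Import structures.
From mathcomp Require Import all_boot all_order all_algebra.
From Stdlib Require Import ClassicalEpsilon.
Set Implicit Arguments. Unset Strict Implicit. Unset Printing Implicit Defensive.
Import Order.TTheory GRing.Theory Num.Theory.
Local Open Scope ring_scope.

Section Defs.
Variable R : realFieldType.

Definition gfact (a alpha : R) (n : nat) : {poly R} :=
  \prod_(j < n) ('X - (a + j%:R * alpha)%:P).

Definition gstirling_spec (alpha beta gamma : R) (S : nat -> nat -> R) : Prop :=
  forall n : nat, gfact 0 alpha n = \sum_(k < n.+1) S n k *: gfact gamma beta k.

Definition gstirling (alpha beta gamma : R) : nat -> nat -> R :=
  epsilon (inhabits (fun _ _ => 0)) (gstirling_spec alpha beta gamma).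

(* binom(k+lambda-1, k) = lambda (lambda+1) ... (lambda+k-1) / k! *)
Definition mbinom (lambda k : nat) : R :=
  (\prod_(i < k) (lambda + i)%:R) / k`!%:R.

Definition Apoly (lambda : nat) (x : R) (n : nat) (alpha beta gamma : R) : R :=
  \sum_(k < n.+1) mbinom lambda k * (-1) ^+ (n + k) * beta ^+ k * k`!%:R
                  * gstirling alpha (- beta) (- gamma) n k * x ^+ k.

Definition fps := nat -> R.
Definition fps_one : fps := fun n => (n == 0%N)%:R.
Definition fps_const (c : R) : fps := fun n => if n == 0%N then c else 0.
Definition fps_add (f g : fps) : fps := fun n => f n + g n.
Definition fps_mul (f g : fps) : fps :=
  fun n => \sum_(i < n.+1) f i * g (n - i)%N.
Definition fps_pow (f : fps) (k : nat) : fps := iter k (fps_mul f) fps_one.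

Fixpoint fps_inv_seq (f : fps) (n : nat) : seq R :=
  match n with
  | 0 => [:: (f 0%N)^-1]
  | m.+1 => let s := fps_inv_seq f m in
            rcons s (- (f 0%N)^-1 * \sum_(i < m.+1) f i.+1 * nth 0 s (m - i)%N)
  end.
Definition fps_inv (f : fps) : fps := fun n => nth 0 (fps_inv_seq f n) n.

Definition gbinom (c : R) (j : nat) : R := (\prod_(i < j) (c - i%:R)) / j`!%:R.

(* (1 + alpha t)^c = sum_j binom(c,j) alpha^j t^j *)
Definition fps_binpow (alpha c : R) : fps := fun j => gbinom c j * alpha ^+ j.

(* Higher order generalised Euler polynomials:
   [2/((1+alpha t)^{beta/alpha}+1)]^lambda (1+alpha t)^{x/alpha}
     = sum_n E_n^{(lambda)}(alpha,beta,x) t^n/n!. *)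
Definition genEuler (lambda : nat) (n : nat) (alpha beta x : R) : R :=
  n`!%:R *
  fps_mul
    (fps_pow (fps_mul (fps_const 2)
               (fps_inv (fps_add (fps_binpow alpha (beta / alpha)) fps_one)))
             lambda)
    (fps_binpow alpha (x / alpha)) n.

End Defs.

(* Main.v *)
Require Import Defs.
From HB Require Import structures.
From mathcomp Require Import all_boot all_order all_algebra.
From mathcomp Require Import boolp.
From Stdlib Require Import ClassicalEpsilon.
From mathcomp Require Import ring zify.
Set Implicit Arguments. Unset Strict Implicit. Unset Printing Implicit Defensive.
Import Order.TTheory GRing.Theory Num.Theory.
Local Open Scope ring_scope.

Section FPS.
Variable R : realFieldType.
Definition K : Type := fps R.
HB.instance Definition _ := gen_eqMixin K.
HB.instance Definition _ := gen_choiceMixin K.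

Definition kzero : K := fun _ => 0.
Definition kopp (f : K) : K := fun n => - f n.
Definition kadd (f g : K) : K := fun n => f n + g n.

Lemma feq (f g : K) : (forall n, f n = g n) -> f = g.
Proof. move=> H; apply: functional_extensionality_dep => n; exact: H. Qed.

Lemma kaddA : associative kadd. Proof. by move=> f g h; apply: feq => n; rewrite /kadd addrA. Qed.
Lemma kaddC : commutative kadd. Proof. by move=> f g; apply: feq => n; rewrite /kadd addrC. Qed.
Lemma kadd0 : left_id kzero kadd. Proof. by move=> f; apply: feq => n; rewrite /kadd add0r. Qed.
Lemma kaddN : left_inverse kzero kopp kadd. Proof. by move=> f; apply: feq => n; rewrite /kadd /kopp addNr. Qed.
HB.instance Definition _ := GRing.isZmodule.Build K kaddA kaddC kadd0 kaddN.

Definition P (n : nat) (f : K) : {poly R} := \poly_(i < n.+1) f i.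
Lemma coefP (n : nat) (f : K) (i : nat) : (i <= n)%N -> (P n f)`_i = f i.
Proof. by move=> H; rewrite /P coef_poly ltnS H. Qed.

Lemma bridge (n : nat) (f g : K) (p q : {poly R}) :
  (forall i, (i <= n)%N -> p`_i = f i) -> (forall i, (i <= n)%N -> q`_i = g i) ->
  fps_mul f g n = (p * q)`_n.
Proof.
move=> Hp Hq; rewrite coefM /fps_mul; apply: eq_bigr => i _.
by rewrite Hp ?Hq // ?leq_subr // -ltnS.
Qed.

Lemma bridgeP (n : nat) (f g : K) (i : nat) : (i <= n)%N -> fps_mul f g i = (P n f * P n g)`_i.
Proof.
move=> Hi; apply: bridge => j Hj; apply: coefP; exact: leq_trans Hj Hi.
Qed.

Lemma kmulA : associative (@fps_mul R).
Proof.
move=> f g h; apply: feq => n.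
rewrite (bridge (p := P n f) (q := P n g * P n h)); last first.
- by move=> i Hi; rewrite -bridgeP.
- by move=> i Hi; rewrite coefP.
rewrite [RHS](bridge (p := P n f * P n g) (q := P n h)); last first.
- by move=> i Hi; rewrite coefP.
- by move=> i Hi; rewrite -bridgeP.
by rewrite mulrA.
Qed.
Lemma kmulC : commutative (@fps_mul R).
Proof. by move=> f g; apply: feq => n; rewrite !(bridgeP _ _ (leqnn n)) mulrC. Qed.
Lemma kmul1 : left_id (@fps_one R) (@fps_mul R).
Proof.
move=> f; apply: feq => n; rewrite (bridge (p := 1) (q := P n f)).
  by rewrite mul1r coefP.
- by move=> i _; rewrite coef1 /fps_one.
- by move=> i Hi; rewrite coefP.
Qed.
Lemma kmulDl : left_distributive (@fps_mul R) kadd.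
Proof.
move=> f g h; apply: feq => n; rewrite /kadd !(bridgeP _ _ (leqnn n)).
have -> : P n (kadd f g) = P n f + P n g.
  by apply/polyP => i; rewrite coefD !coef_poly; case: ifP; rewrite ?addr0.
by rewrite mulrDl coefD.
Qed.
Lemma kone0 : (@fps_one R) != kzero.
Proof.
apply/eqP => /(congr1 (fun f : K => f 0%N)); rewrite /fps_one /kzero /= => /eqP; by rewrite oner_eq0.
Qed.
HB.instance Definition _ := GRing.Zmodule_isComNzRing.Build K kmulA kmulC kmul1 kmulDl kone0.

Lemma kmulE (f g : K) : fps_mul f g = f * g. Proof. by []. Qed.
Lemma kaddE (f g : K) : fps_add f g = f + g. Proof. by []. Qed.
Lemma koneE : fps_one R = 1 :> K. Proof. by []. Qed.
Lemma kpowE (f : K) k : fps_pow f k = f ^+ k.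
Proof. elim: k => [|k IH] //=; by rewrite exprS -IH. Qed.
Lemma coefD' (f g : K) n : (f + g) n = f n + g n. Proof. by []. Qed.
Lemma coefN' (f : K) n : (- f) n = - f n. Proof. by []. Qed.
Lemma coefB' (f g : K) n : (f - g) n = f n - g n. Proof. by []. Qed.
Lemma coef1' n : (1 : K) n = (n == 0%N)%:R. Proof. by []. Qed.
Lemma coefM' (f g : K) n : (f * g) n = \sum_(i < n.+1) f i * g (n - i)%N. Proof. by []. Qed.

End FPS.

Section FPS2.
Variable R : realFieldType.
Local Notation K := (K R).

Definition cst (c : R) : K := fps_const c.

Lemma bridgeK (n : nat) (f g : K) (p q : {poly R}) :
  (forall i, (i <= n)%N -> p`_i = f i) -> (forall i, (i <= n)%N -> q`_i = g i) ->
  (f * g) n = (p * q)`_n.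
Proof. exact: bridge. Qed.
Lemma bridgePK (n : nat) (f g : K) (i : nat) : (i <= n)%N -> (f * g) i = (P n f * P n g)`_i.
Proof. exact: bridgeP. Qed.

Lemma coefCM' (c : R) (f : K) n : (cst c * f) n = c * f n.
Proof.
rewrite (bridgeK (p := c%:P) (q := P n f)).
- by rewrite coefCM coefP.
- by move=> i _; rewrite coefC /cst /fps_const.
- by move=> i Hi; rewrite coefP.
Qed.
Lemma coef_cst c n : (cst c : K) n = if n == 0%N then c else 0. Proof. by []. Qed.
Lemma cstD a b : cst (a + b) = cst a + cst b.
Proof. apply: feq => n; rewrite coefD' !coef_cst; case: ifP => //; by rewrite addr0. Qed.
Lemma cstM a b : cst (a * b) = cst a * cst b.
Proof. apply: feq => n; rewrite coefCM' !coef_cst; case: ifP => //; by rewrite mulr0. Qed.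
Lemma cst1 : cst 1 = 1.
Proof. by apply: feq => n; rewrite coef_cst coef1'; case: ifP. Qed.
Lemma cst0 : cst 0 = 0.
Proof. by apply: feq => n; rewrite coef_cst; case: ifP. Qed.
Lemma cstN a : cst (- a) = - cst a.
Proof. apply: feq => n; rewrite coefN' !coef_cst; case: ifP => //; by rewrite oppr0. Qed.
Lemma cstn (m : nat) : cst m%:R = m%:R.
Proof. elim: m => [|m IH]; first by rewrite cst0. by rewrite -addn1 !natrD cstD IH cst1. Qed.
Lemma cstX a k : cst (a ^+ k) = cst a ^+ k.
Proof. elim: k => [|k IH]; first by rewrite cst1. by rewrite !exprS cstM IH. Qed.

Lemma coefM0 (f g : K) : (f * g) 0%N = f 0%N * g 0%N.
Proof. by rewrite coefM' big_ord1. Qed.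
Lemma coefX0 (f : K) k : (f ^+ k) 0%N = f 0%N ^+ k.
Proof. elim: k => [|k IH]; first by rewrite expr0 coef1'. by rewrite !exprS coefM0 IH. Qed.

Lemma coef_low (f : K) k i : f 0%N = 0 -> (i < k)%N -> (f ^+ k) i = 0.
Proof.
move=> f0; elim: k i => [|k IH] i //= Hi.
rewrite exprS coefM' big_ord_recl f0 mul0r add0r big1 // => j _.
rewrite IH ?mulr0 //=. rewrite subnS. move: Hi (ltn_ord j); rewrite /bump /=. lia.
Qed.

Definition X : K := fun n => (n == 1%N)%:R.
Lemma coefXM' (f : K) n : (X * f) n = if n is m.+1 then f m else 0.
Proof.
rewrite (bridgeK (p := 'X) (q := P n f)).
- rewrite coefXM; case: n => [|m] //=; by rewrite coefP.
- by move=> i _; rewrite coefX.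
- by move=> i Hi; rewrite coefP.
Qed.

Definition D (f : K) : K := fun n => (n.+1)%:R * f n.+1.
Lemma DD (f g : K) : D (f + g) = D f + D g.
Proof. by apply: feq => n; rewrite /D coefD' !coefD' mulrDr. Qed.
Lemma DB (f g : K) : D (f - g) = D f - D g.
Proof. by apply: feq => n; rewrite /D !coefB' mulrBr. Qed.
Lemma D1 : D 1 = 0.
Proof. by apply: feq => n; rewrite /D coef1' mulr0. Qed.
Lemma DM (f g : K) : D (f * g) = D f * g + f * D g.
Proof.
apply: feq => n; rewrite coefD' {1}/D.
rewrite (bridgePK _ _ (leqnn n.+1)) mulr_natl -coef_deriv derivM coefD.
have Hd : forall h : K, forall i, (i <= n)%N -> (P n.+1 h)^`()`_i = D h i.
  move=> h i Hi; rewrite coef_deriv coefP // /D mulr_natl //.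
have Hp : forall h : K, forall i, (i <= n)%N -> (P n.+1 h)`_i = h i.
  move=> h i Hi; rewrite coefP //; exact: leq_trans Hi _.
congr (_ + _); symmetry; apply: bridgeK => i Hi; by rewrite ?Hd ?Hp.
Qed.
Lemma DX (f : K) k : D (f ^+ k.+1) = f ^+ k * D f * k.+1%:R.
Proof.
elim: k => [|k IH]; first by rewrite expr1 expr0 mul1r mulr1.
rewrite exprS DM IH exprS; rewrite [(k.+2)%:R]mulrSr. ring.
Qed.
Lemma coefXD (f : K) n : (X * D f) n = n%:R * f n.
Proof. by rewrite coefXM'; case: n => [|m] //; rewrite mul0r. Qed.

Lemma size_inv_seq (f : K) n : size (fps_inv_seq f n) = n.+1.
Proof. by elim: n => [|n IH] //=; rewrite size_rcons IH. Qed.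
Lemma nth_inv_seq (f : K) n i : (i <= n)%N -> nth 0 (fps_inv_seq f n) i = fps_inv f i.
Proof.
elim: n => [|n IH] Hi; first by case: i Hi.
case: (ltnP i n.+1) => Hin.
  by rewrite /= nth_rcons size_inv_seq Hin IH.
have -> : i = n.+1 by apply/eqP; rewrite eqn_leq Hi.
by [].
Qed.
Lemma inv_mul (f : K) : f 0%N != 0 -> (fps_inv f : K) * f = 1.
Proof.
move=> f0; apply: feq => n; rewrite mulrC coef1'.
case: n => [|m].
  by rewrite coefM0 /fps_inv /= divff.
rewrite coefM' big_ord_recl /=.
have -> : fps_inv f m.+1 = - (f 0%N)^-1 * \sum_(i < m.+1) f i.+1 * fps_inv f (m - i)%N.
  rewrite /fps_inv /= nth_rcons size_inv_seq ltnn eqxx; congr (_ * _); apply: eq_bigr => i _.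
  by rewrite nth_inv_seq // leq_subr.
rewrite mulrA mulrN mulrV ?unitfE // mulNr mul1r.
rewrite (eq_bigr (fun i : 'I_m.+1 => f i.+1 * fps_inv f (m - i)%N)); first by rewrite addNr.
by move=> i _; rewrite /bump /=.
Qed.

End FPS2.

Section FPS3.
Variable R : realFieldType.
Local Notation K := (K R).

Fixpoint Srec (a b g : R) (n k : nat) : R :=
  match n with
  | 0 => (k == 0%N)%:R
  | n'.+1 => (if k is k'.+1 then Srec a b g n' k' else 0)
             + (k%:R * b + g - n'%:R * a) * Srec a b g n' k
  end.

Lemma fact_neq0 n : (n`!%:R : R) != 0.
Proof. by rewrite pnatr_eq0 -lt0n fact_gt0. Qed.
Lemma natS_neq0 n : ((n.+1)%:R : R) != 0.
Proof. by rewrite pnatr_eq0. Qed.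

Lemma gbinomS (c : R) n : (n.+1)%:R * gbinom c n.+1 = (c - n%:R) * gbinom c n.
Proof.
rewrite /gbinom big_ord_recr /= factS natrM.
have h1 := fact_neq0 n; have h2 := natS_neq0 n.
field. by rewrite h1 addrC natr1.
Qed.
Lemma gbinom0 (c : R) : gbinom c 0 = 1.
Proof. by rewrite /gbinom big_ord0 divr1. Qed.

Variable alpha : R.
Hypothesis ha : alpha != 0.

Definition B (c : R) : K := fps_binpow alpha (c / alpha).
Definition W : K := 1 + cst alpha * X R.

Lemma B0 c : B c 0%N = 1.
Proof. by rewrite /B /fps_binpow gbinom0 mulr1. Qed.

Lemma coefW (f : K) n : (W * D f) n = (n.+1)%:R * f n.+1 + alpha * (n%:R * f n).
Proof. by rewrite /W mulrDl mul1r coefD' -mulrA coefCM' coefXD. Qed.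

Lemma ODE c : W * D (B c) = cst c * B c.
Proof.
apply: feq => n; rewrite coefW coefCM' /B /fps_binpow.
rewrite mulrA gbinomS exprS.
field. exact: ha.
Qed.

Variables beta gamma : R.
Definition u : K := B beta - 1.
Definition F k : K := u ^+ k * B gamma.

Lemma u0 : u 0%N = 0.
Proof. by rewrite /u coefB' B0 coef1' subrr. Qed.

Lemma Frec0 : W * D (F 0) = cst gamma * F 0.
Proof. by rewrite /F expr0 !mul1r ODE. Qed.

Lemma FrecS k : W * D (F k.+1) =
  cst ((k.+1)%:R * beta + gamma) * F k.+1 + cst ((k.+1)%:R * beta) * F k.
Proof.
rewrite /F DM DX /u DB D1 subr0.
have Eb := ODE beta; have Eg := ODE gamma.
set db := D (B beta) in Eb *; set dg := D (B gamma) in Eg *.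
set bb := B beta in Eb *; set bg := B gamma in Eg *.
set w := W in Eb Eg *.
transitivity ((bb - 1) ^+ k * (k.+1)%:R * bg * (w * db) + (bb - 1) ^+ k.+1 * (w * dg)).
  ring.
rewrite Eb Eg !cstD !cstM cstn. rewrite exprS. ring.
Qed.

Lemma Fcoef n k : n`!%:R * F k n = beta ^+ k * k`!%:R * Srec alpha beta gamma n k.
Proof.
elim: n k => [|n IH] k.
  rewrite /F coefM0 coefX0 u0 B0 /=; case: k => [|k].
    rewrite !expr0 /=. ring.
  rewrite expr0n /=. ring.
rewrite factS natrM.
case: k => [|k].
  have E := congr1 (fun f : K => f n) Frec0; rewrite /= coefW coefCM' in E.
  have I0 := IH 0%N.
  transitivity (n`!%:R * ((n.+1)%:R * F 0 n.+1 + alpha * (n%:R * F 0 n)) - alpha * n%:R * (n`!%:R * F 0 n)).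
    ring.
  rewrite E.
  transitivity (gamma * (n`!%:R * F 0 n) - alpha * n%:R * (n`!%:R * F 0 n)).
    ring.
  rewrite I0 /=. ring.
have E := congr1 (fun f : K => f n) (FrecS k); rewrite /= coefW coefD' !coefCM' in E.
have I1 := IH k.+1; have I0 := IH k.
transitivity (n`!%:R * ((n.+1)%:R * F k.+1 n.+1 + alpha * (n%:R * F k.+1 n)) - alpha * n%:R * (n`!%:R * F k.+1 n)).
  ring.
rewrite E.
transitivity (((k.+1)%:R * beta + gamma) * (n`!%:R * F k.+1 n) + (k.+1)%:R * beta * (n`!%:R * F k n) - alpha * n%:R * (n`!%:R * F k.+1 n)).
  ring.
rewrite I1 I0 /= factS natrM exprS. ring.
Qed.

End FPS3.

Section Stir.
Variable R : realFieldType.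

Lemma Srec_hi (a b g : R) n k : (n < k)%N -> Srec a b g n k = 0.
Proof.
elim: n k => [|n IH] [|k] //= H.
  by rewrite IH // IH ?mulr0 ?addr0 // ltnW.
Qed.

Lemma gfactS (g b : R) k : gfact g b k.+1 = gfact g b k * ('X - (g + k%:R * b)%:P).
Proof. by rewrite /gfact big_ord_recr. Qed.

Lemma size_gfact (g b : R) k : size (gfact g b k) = k.+1.
Proof. by rewrite /gfact size_prod_XsubC /index_enum unlock -enumT size_enum_ord. Qed.
Lemma monic_gfact (g b : R) k : gfact g b k \is monic.
Proof. exact: monic_prod_XsubC. Qed.
Lemma coef_gfact_top (g b : R) k : (gfact g b k)`_k = 1.
Proof. by have /monicP := monic_gfact g b k; rewrite lead_coefE size_gfact. Qed.
Lemma coef_gfact_hi (g b : R) k j : (k < j)%N -> (gfact g b k)`_j = 0.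
Proof. by move=> H; rewrite nth_default // size_gfact. Qed.

Lemma Srec_spec (a b g : R) : gstirling_spec a b g (Srec a b g).
Proof.
move=> n; elim: n => [|n IH].
  rewrite big_ord1 /= scale1r /gfact !big_ord0 //.
rewrite gfactS IH.
have key : forall k, gfact g b k * ('X - (0 + n%:R * a)%:P)
   = gfact g b k.+1 + (k%:R * b + g - n%:R * a) *: gfact g b k.
  move=> k; rewrite gfactS -mul_polyC [_%:P * gfact _ _ _]mulrC -mulrDr; congr (_ * _).
  rewrite add0r polyCB polyCD; ring.
rewrite big_distrl /=.
rewrite (eq_bigr (fun k : 'I_n.+1 => Srec a b g n k *: gfact g b k.+1
     + (Srec a b g n k * (k%:R * b + g - n%:R * a)) *: gfact g b k)); last first.
  move=> k _; rewrite -scalerAl key scalerDr scalerA mulrC //.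
rewrite big_split /=.
rewrite (eq_bigr (fun k : 'I_n.+2 => (if (k : nat) is k'.+1 then Srec a b g n k' else 0) *: gfact g b k
    + ((k%:R * b + g - n%:R * a) * Srec a b g n k) *: gfact g b k)); last first.
  by move=> k _ /=; rewrite scalerDl.
rewrite big_split /=; congr (_ + _).
  by rewrite [RHS]big_ord_recl /= scale0r add0r.
rewrite [RHS]big_ord_recr /= Srec_hi // mulr0 scale0r addr0.
by apply: eq_bigr => k _; rewrite mulrC.
Qed.

Lemma gfact_indep (g b : R) m (c : nat -> R) :
  \sum_(k < m) c k *: gfact g b k = 0 -> forall k, (k < m)%N -> c k = 0.
Proof.
elim: m => [|m IH] Hs k Hk //.
have Hm : c m = 0.
  have := congr1 (fun p : {poly R} => p`_m) Hs.
  rewrite big_ord_recr /= coefD coefZ coef_gfact_top mulr1 coef0 coef_sum big1 ?add0r //.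
  move=> j _; rewrite coefZ coef_gfact_hi ?mulr0 //.
have Hs' : \sum_(k < m) c k *: gfact g b k = 0.
  by move: Hs; rewrite big_ord_recr /= Hm scale0r addr0.
case: (ltnP k m) => Hkm; first exact: IH.
by have -> : k = m by apply/eqP; rewrite eqn_leq Hkm -ltnS Hk.
Qed.

Lemma gstirlingE (a b g : R) n k : (k <= n)%N -> gstirling a b g n k = Srec a b g n k.
Proof.
move=> Hk.
have Hs : gstirling_spec a b g (gstirling a b g).
  apply: epsilon_spec; exists (Srec a b g); exact: Srec_spec.
have E : \sum_(j < n.+1) (gstirling a b g n j - Srec a b g n j) *: gfact g b j = 0.
  rewrite (eq_bigr (fun j : 'I_n.+1 => gstirling a b g n j *: gfact g b j - Srec a b g n j *: gfact g b j)).
    by rewrite sumrB -Hs -Srec_spec subrr.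
  by move=> j _; rewrite scalerBl.
apply/eqP; rewrite -subr_eq0; apply/eqP; exact: (@gfact_indep g b n.+1 (fun j => gstirling a b g n j - Srec a b g n j) E).
Qed.

Lemma Srec_neg (a b g : R) n k :
  Srec (- a) (- b) (- g) n k = (-1) ^+ (n + k) * Srec a b g n k.
Proof.
elim: n k => [|n IH] k.
  by case: k => [|k] /=; rewrite ?expr0 ?mul1r // mulr0.
case: k => [|k].
  rewrite addn0 exprS [Srec (- a) _ _ _ _]/= [Srec a _ _ _ _]/= !IH addn0. ring.
rewrite addSn exprS [Srec (- a) _ _ _ _]/= [Srec a _ _ _ _]/= !IH !addnS exprS. ring.
Qed.

End Stir.

Section Main.
Variable R : realFieldType.
Local Notation K := (K R).

Definition eqm (M : nat) (f g : K) := forall i, (i < M)%N -> f i = g i.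

Lemma eqm_refl M f : eqm M f f. Proof. by []. Qed.
Lemma eqm_sym M f g : eqm M f g -> eqm M g f. Proof. by move=> H i Hi; rewrite H. Qed.
Lemma eqm_trans M f g h : eqm M f g -> eqm M g h -> eqm M f h.
Proof. by move=> H1 H2 i Hi; rewrite H1 ?H2. Qed.
Lemma eqm_add M f f' g g' : eqm M f f' -> eqm M g g' -> eqm M (f + g) (f' + g').
Proof. by move=> H1 H2 i Hi; rewrite !coefD' H1 ?H2. Qed.
Lemma eqm_mul M f f' g g' : eqm M f f' -> eqm M g g' -> eqm M (f * g) (f' * g').
Proof.
move=> H1 H2 i Hi; rewrite !coefM'; apply: eq_bigr => j _.
have Hj := ltn_ord j.
rewrite H1 ?H2 //.
- move: Hi; lia.
- move: Hi Hj; lia.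
Qed.

Lemma coef_sumK (m : nat) (G : nat -> K) n :
  (\sum_(k < m) G k) n = \sum_(k < m) G k n.
Proof.
elim: m => [|m IH]; first by rewrite !big_ord0.
by rewrite !big_ord_recr /= -IH.
Qed.

Definition mb' (l k : nat) : R := mbinom R l k.

Lemma mb0 l : mbinom R l 0 = 1.
Proof. by rewrite /mbinom big_ord0 divr1. Qed.
Lemma mb_zero k : mbinom R 0 k.+1 = 0.
Proof. by rewrite /mbinom big_ord_recl /= add0n mul0r mul0r. Qed.
Lemma mbP l k : mbinom R l k.+1 = mbinom R l.+1 k.+1 - mbinom R l.+1 k.
Proof.
rewrite /mbinom big_ord_recl big_ord_recr /= factS natrM.
rewrite (eq_bigr (fun i : 'I_k => (l.+1 + i)%:R)); last first.
  by move=> i _; rewrite /bump /= add1n addnS.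
have h1 := fact_neq0 R k; have h2 := natS_neq0 R k.
rewrite !natrD /=. field. by rewrite h1 addrC natr1 h2.
Qed.

Definition csg (l k : nat) : R := (-1) ^+ k * mbinom R l k.

Variable v : K.
Hypothesis v0 : v 0%N = 0.

Definition T (l m : nat) : K := \sum_(k < m.+1) cst (csg l k) * v ^+ k.

Lemma Ttele l m : T l.+1 m * (1 + v) = T l m + cst (csg l.+1 m) * v ^+ m.+1.
Proof.
elim: m => [|m IH].
  rewrite /T !big_ord1 /csg !expr0 !mul1r !mb0 cst1 expr1; ring.
rewrite [T l.+1 m.+1]/T big_ord_recr /= -/(T l.+1 m) mulrDl IH.
rewrite [T l m.+1]/T big_ord_recr /= -/(T l m).
have -> : cst (csg l m.+1) = cst (csg l.+1 m) + cst (csg l.+1 m.+1).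
  rewrite -cstD /csg mbP exprS; congr cst; ring.
rewrite !exprS; ring.
Qed.

Lemma T0 m : T 0 m = 1.
Proof.
rewrite /T big_ord_recl big1 /=.
  by rewrite /csg mb0 !expr0 [1 * 1]mul1r cst1 mulr1 addr0.
by move=> i _; rewrite /csg /bump /= add1n mb_zero mulr0 cst0 mul0r.
Qed.

Lemma eqm_high M (f : K) : eqm M.+1 (f * v ^+ M.+1) 0.
Proof.
move=> i Hi; rewrite mulrC coefM' /= big1 // => j _.
rewrite coef_low //; first by rewrite GRing.mul0r. move: Hi (ltn_ord j); lia.
Qed.

Lemma Tinv l m : eqm m.+1 (T l m * (1 + v) ^+ l) 1.
Proof.
elim: l => [|l IH]; first by rewrite T0 expr0 mulr1.
rewrite exprS mulrA Ttele mulrDl.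
rewrite -[X in eqm _ _ X]addr0; apply: eqm_add => //.
rewrite mulrC mulrA; exact: eqm_high.
Qed.

Lemma Hpow (H : K) l m : H * (1 + v) = 1 -> eqm m.+1 (H ^+ l) (T l m).
Proof.
move=> HH.
apply: (@eqm_trans _ _ (H ^+ l * (T l m * (1 + v) ^+ l))).
  rewrite -{1}[H ^+ l]mulr1; apply: eqm_mul => //. apply: eqm_sym. exact: Tinv.
have -> : H ^+ l * (T l m * (1 + v) ^+ l) = T l m * (H * (1 + v)) ^+ l.
  by rewrite exprMn; ring.
by rewrite HH expr1n mulr1.
Qed.

End Main.

Lemma genEuler_sum (R : realFieldType) (alpha beta gamma : R) (lambda : nat)
  (halpha : alpha != 0) (n : nat) :
  genEuler lambda n alpha beta gamma =
  \sum_(k < n.+1) csg R lambda k * (2^-1) ^+ k * (beta ^+ k * k`!%:R * Srec alpha beta gamma n k).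
Proof.
have h2 : (2 : R) != 0 by rewrite pnatr_eq0.
set Bb := B alpha beta; set Bg := B alpha gamma.
set H : K R := cst 2 * (fps_inv (Bb + 1) : K R).
have HG : genEuler lambda n alpha beta gamma = n`!%:R * (H ^+ lambda * Bg) n.
  by rewrite /genEuler kpowE.
set v : K R := cst (2^-1) * u alpha beta.
have v0 : v 0%N = 0 by rewrite /v coefCM' u0 mulr0.
have H1v : H * (1 + v) = 1.
  have E : 1 + v = cst (2^-1) * (Bb + 1).
    apply: feq => i; rewrite coefCM'.
    transitivity ((1 : K R) i + v i); first by [].
    rewrite /v coefCM'.
    transitivity ((1 : K R) i + 2^-1 * (Bb i - (1 : K R) i)); first by [].
    transitivity (2^-1 * (Bb i + (1 : K R) i)); last by [].
    by field.
  rewrite E; transitivity (cst 2 * cst 2^-1 * ((fps_inv (Bb + 1) : K R) * (Bb + 1))).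
    rewrite /H; ring.
  rewrite -cstM mulfV // cst1 mul1r inv_mul //.
  rewrite coefD' coef1' /Bb B0 //= pnatr_eq0 //.
have Hp := @Hpow R v v0 H lambda n H1v.
rewrite HG (@eqm_mul R n.+1 _ _ _ Bg Hp (fun i _ => erefl) n (ltnSn n)).
rewrite /T big_distrl (@coef_sumK R n.+1 (fun k : nat => cst (csg R lambda k) * v ^+ k * Bg) n) big_distrr /=; apply: eq_bigr => k _.
have -> : cst (csg R lambda k) * v ^+ k * Bg = cst (csg R lambda k * 2^-1 ^+ k) * F alpha beta gamma k.
  rewrite /v exprMn -cstX cstM /F /Bg; ring.
by rewrite coefCM' -(Fcoef halpha); ring.
Qed.

Unset Implicit Arguments.
Theorem mainTheorem10 (R : realFieldType) (alpha beta gamma : R) (lambda : nat)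
  (halpha : alpha != 0) (n : nat) :
  genEuler lambda n alpha beta gamma
    = (-1) ^+ n * Apoly lambda (- (1 / 2)) n alpha (- beta) (- gamma)
  /\ genEuler lambda n alpha beta gamma
    = Apoly lambda (- (1 / 2)) n (- alpha) beta gamma.
Proof.
rewrite (genEuler_sum beta gamma lambda halpha n) /Apoly.
have ht : ((-1) ^+ n * (-1) ^+ n = 1 :> R) by rewrite -expr2 sqrr_sign.
split.
  rewrite big_distrr; apply: eq_bigr => k _ /=.
  have hk : (k <= n)%N by rewrite -ltnS ltn_ord.
  have hs : ((-1) ^+ k * (-1) ^+ k = 1 :> R) by rewrite -expr2 sqrr_sign.
  rewrite !opprK (gstirlingE _ _ _ hk) -[(- beta)]mulN1r -[- (1 / 2)]mulN1r !exprMn exprD /csg.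
  transitivity (((-1) ^+ n * (-1) ^+ n) * ((-1) ^+ k * (-1) ^+ k) * ((-1) ^+ k * mbinom R lambda k * (2^-1) ^+ k * (beta ^+ k * k`!%:R * Srec alpha beta gamma n k))).
    by rewrite ht hs !mul1r.
  rewrite /= expr1n. ring.
apply: eq_bigr => k _.
have hk : (k <= n)%N by rewrite -ltnS ltn_ord.
have hs : ((-1) ^+ (n + k) * (-1) ^+ (n + k) = 1 :> R) by rewrite -expr2 sqrr_sign.
rewrite (gstirlingE _ _ _ hk) Srec_neg -[- (1 / 2)]mulN1r !exprMn expr1n /csg.
transitivity (((-1) ^+ (n + k) * (-1) ^+ (n + k)) * ((-1) ^+ k * mbinom R lambda k * (2^-1) ^+ k * (beta ^+ k * k`!%:R * Srec alpha beta gamma n k))).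
  by rewrite hs mul1r.
ring.
Qed.
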